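(* Let $\gamma>0$ and $\mathbf y^{\mathrm{in}},\mathbf z^{\mathrm{in}}\in\underline{\mathcal Y}(\gamma)$, and let $(\mathbf Y^{(i)})_{i=0}^n$ and $(\mathbf Z^{(i)})_{i=0}^n$ be $\underline{\mathcal Y}_{\mathcal T}(\gamma)$-valued sequences, driven by the same $\mathbf W$, each satisfying the iteration scheme (It), with initial conditions $\mathbf y^{\mathrm{in}}$ and $\mathbf z^{\mathrm{in}}$ respectively. Then almost surely: (a) $\mathbf Y^{(0)}(\cdot)\ge\mathbf Y^{(1)}(\cdot)\ge\cdots\ge\mathbf Y^{(n)}(\cdot)$; (b) if $\mathbf y^{\mathrm{in}}\ge\mathbf z^{\mathrm{in}}$, then $\mathbf Y^{(i)}(\cdot)\ge\mathbf Z^{(i)}(\cdot)$ for $i=0,\dots,n$.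
   Context: Fixed $\beta\ge1$. $\hat{\mathbb Z}=\tfrac12+\mathbb Z$; index intervals use $(i,j)=(j,i)$ if $j<i$; $z_{\mathcal I}:=\sum_{b\in\mathcal I\cap\hat{\mathbb Z}}z_b$; $\mathrm{Av}_{\mathcal I}(\mathbf y)=|\mathcal I\cap\hat{\mathbb Z}|^{-1}\sum_{a\in\mathcal I\cap\hat{\mathbb Z}}y_a$. $\underline{\mathcal Y}(\gamma)=\{\mathbf y\in(0,\infty)^{\hat{\mathbb Z}}:\liminf_{|m|\to\infty}\mathrm{Av}_{(0,m)}(\mathbf y)\ge\gamma\}$; $C_+([0,\infty))=\{y\in C([0,\infty)):y>0\}$; $\underline{\mathcal Y}_{\mathcal T}(\gamma)=\{\mathbf y\in C_+([0,\infty))^{\hat{\mathbb Z}}:\liminf_{|m|\to\infty}\inf_{s\le t}\mathrm{Av}_{(0,m)}(\mathbf y(s))\ge\gamma\ \forall t\}$. $W_a=B_{a+1/2}-B_{a-1/2}$ with independent standard Brownian motions. $\psi_a(y,\mathbf z)=\tfrac12\sum_{i\in\mathbb Z:|i-a|>1}\frac{y}{z_{(a,i)}(y+z_{(a,i)})}$ ($y>0$), $\psi_a(0,\cdot)=0$. Iteration scheme (It) with initial condition $\mathbf y^{\mathrm{in}}$: $Y^{(0)}_a(t)=y^{\mathrm{in}}_a+W_a(t)+\beta\int_0^t\frac{ds}{Y^{(0)}_a(s)}$; for $n\ge1$, $Y^{(n)}_a(t)=y^{\mathrm{in}}_a+W_a(t)+\beta\int_0^t\big(\frac1{Y^{(n)}_a(s)}-\psi_a(Y^{(n)}_a(s),\mathbf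 Y^{(n-1)}(s))\big)ds$, $a\in\hat{\mathbb Z}$. Order: coordinatewise and for all times. *)

(* Defs.v *)
From Stdlib Require Import Reals Lra Lia ZArith ClassicalEpsilon.
Open Scope R_scope.

(* The half-integer lattice  Zhat = 1/2 + Z  is encoded by Z:              *)
(*      k : Z   represents the half-integer   a = k + 1/2.                 *)
(* Brownian motions B_b are indexed by the integers b : Z.                 *)
(* Hence W_a = B_{a+1/2} - B_{a-1/2} becomes  W k = B (k+1) - B k.         *)

Fixpoint sumN (f : nat -> R) (n : nat) : R :=
  match n with
  | O => 0
  | S n' => sumN f n' + f n'
  end.

(* sum_{m = lo}^{hi} f m  over integers (0 if hi < lo) *)
Definition sumZ (f : Z -> R) (lo hi : Z) : R :=
  sumN (fun j => f (lo + Z.of_nat j)%Z) (Z.to_nat (hi - lo + 1)).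

(* z_{(a,i)} for a = k + 1/2 (k : Z) and i : Z :
   sum of z_b over half-integers b strictly between a and i.
   If i > a : b = m + 1/2 with k+1 <= m <= i-1;
   if i < a : b = m + 1/2 with i <= m <= k-1. *)
Definition zint (z : Z -> R) (k i : Z) : R :=
  if Z.ltb k i then sumZ z (k + 1) (i - 1) else sumZ z i (k - 1).

(* Av_{(0,m)}(y) for an integer m : average of y_b over the half-integers
   b in the open interval between 0 and m.
   m > 0 : b = j + 1/2, 0 <= j <= m-1 ;  m < 0 : b = j + 1/2, m <= j <= -1.
   (m = 0 : empty interval, value irrelevant, set to 0.) *)
Definition Av0 (y : Z -> R) (m : Z) : R :=
  if Z.ltb 0 m then sumZ y 0 (m - 1) / IZR m
  else if Z.ltb m 0 then sumZ y m (-1) / IZR (- m)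
  else 0.

(* Underline-Y(gamma): positive configurations with
   liminf_{|m| -> oo} Av_{(0,m)}(y) >= gamma. *)
Definition in_Ylow (gamma : R) (y : Z -> R) : Prop :=
  (forall k, 0 < y k) /\
  (forall eps, 0 < eps -> exists M : Z, forall m : Z,
       (M <= Z.abs m)%Z -> gamma - eps <= Av0 y m).

Definition cont_nonneg (f : R -> R) : Prop :=
  forall t, 0 <= t -> forall eps, 0 < eps -> exists delta, 0 < delta /\
    forall s, 0 <= s -> Rabs (s - t) < delta -> Rabs (f s - f t) < eps.

Definition in_Cplus (f : R -> R) : Prop :=
  cont_nonneg f /\ (forall t, 0 <= t -> 0 < f t).

(* Underline-Y_T(gamma): configurations of positive continuous paths with
   liminf_{|m|->oo} inf_{s<=t} Av_{(0,m)}(y(s)) >= gamma for every t. *)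
Definition in_YlowT (gamma : R) (y : Z -> R -> R) : Prop :=
  (forall k, in_Cplus (y k)) /\
  (forall t, 0 <= t -> forall eps, 0 < eps -> exists M : Z, forall m : Z,
       (M <= Z.abs m)%Z ->
       forall s, 0 <= s <= t -> gamma - eps <= Av0 (fun k => y k s) m).

(* Value of a series of reals: its sum if it converges, 0 otherwise. *)
Definition series (u : nat -> R) : R :=
  match excluded_middle_informative (exists l, infinite_sum u l) with
  | left H => proj1_sig (constructive_indefinite_description _ H)
  | right _ => 0
  end.

Definition psi_term (y zz : R) : R := y / (zz * (y + zz)).

(* psi_a(y, z) for a = k + 1/2:
   (1/2) sum_{i in Z, |i-a|>1} y / (z_{(a,i)} (y + z_{(a,i)})),  psi_a(0,.)=0.
   The integers i with |i - a| > 1 are i >= k+2 and i <= k-1; the sum is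
   split into these two one-sided series. *)
Definition psi (k : Z) (y : R) (z : Z -> R) : R :=
  if Rlt_dec 0 y then
    / 2 * (series (fun j => psi_term y (zint z k (k + 2 + Z.of_nat j)%Z))
         + series (fun j => psi_term y (zint z k (k - 1 - Z.of_nat j)%Z)))
  else 0.

Definition is_integral (f : R -> R) (t I : R) : Prop :=
  exists pr : Riemann_integrable f 0 t, RiemannInt pr = I.

Definition Wd (B : Z -> R -> R) (k : Z) (t : R) : R := B (k + 1)%Z t - B k t.

Definition iteration (beta : R) (B : Z -> R -> R) (yin : Z -> R) (n : nat)
    (Y : nat -> Z -> R -> R) : Prop :=
  (forall k t, 0 <= t ->
     is_integral (fun s => / Y O k s) t
       ((Y O k t - yin k - Wd B k t) / beta)) /\
  (forall i, (1 <= i <= n)%nat -> forall k t, 0 <= t ->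
     is_integral (fun s => / Y i k s - psi k (Y i k s) (fun b => Y (i - 1)%nat b s)) t
       ((Y i k t - yin k - Wd B k t) / beta)).

Definition path_le (Y1 Y2 : Z -> R -> R) : Prop :=
  forall k t, 0 <= t -> Y1 k t <= Y2 k t.

(* Main.v *)
Require Import Defs.
From Stdlib Require Import Reals ZArith Lra Lia Psatz ClassicalEpsilon Classical.
Open Scope R_scope.

Lemma sumN_ext f g n : (forall j, (j < n)%nat -> f j = g j) -> sumN f n = sumN g n.
Proof. induction n; simpl; intros H; auto. rewrite IHn; [rewrite H; auto|]; intros; apply H; lia. Qed.

Lemma sumN_le f g n : (forall j, (j < n)%nat -> f j <= g j) -> sumN f n <= sumN g n.
Proof. induction n; simpl; intros H; [lra|]. assert (f n <= g n) by (apply H; lia).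
  assert (sumN f n <= sumN g n) by (apply IHn; intros; apply H; lia). lra. Qed.

Lemma sumN_nonneg f n : (forall j, 0 <= f j) -> 0 <= sumN f n.
Proof. intros H; induction n; simpl; [lra|]. specialize (H n); lra. Qed.

Lemma sumN_split f a b : sumN f (a + b) = sumN f a + sumN (fun j => f (a + j)%nat) b.
Proof. induction b; simpl. rewrite Nat.add_0_r; lra. rewrite Nat.add_succ_r; simpl; rewrite IHb; lra. Qed.

Lemma sumN_front f n : sumN f (S n) = f O + sumN (fun j => f (S j)) n.
Proof. induction n. simpl; lra. change (sumN f (S (S n))) with (sumN f (S n) + f (S n)).
  rewrite IHn; simpl; lra. Qed.

Lemma sumN_rev f n : sumN f n = sumN (fun j => f (n - 1 - j)%nat) n.
Proof. induction n. reflexivity. rewrite (sumN_front (fun j => f (S n - 1 - j)%nat)).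
  change (sumN f (S n)) with (sumN f n + f n). rewrite IHn.
  replace (f (S n - 1 - 0)%nat) with (f n) by (f_equal; lia).
  rewrite (sumN_ext (fun j => f (n - 1 - j)%nat) (fun j => f (S n - 1 - S j)%nat)); [lra|].
  intros; f_equal; lia. Qed.

Lemma sumN_mono_len f a b : (forall j, 0 <= f j) -> (a <= b)%nat -> sumN f a <= sumN f b.
Proof. intros H Hab. replace b with (a + (b - a))%nat by lia. rewrite sumN_split.
  pose proof (sumN_nonneg (fun j => f (a+j)%nat) (b-a) (fun j => H _)). lra. Qed.

Lemma nat_large (x : R) : exists J : nat, x <= INR J.
Proof. destruct (INR_unbounded x) as [n Hn]; exists n; lra. Qed.

Lemma growth (f : Z -> R) (g : R) : 0 < g -> (forall x, 0 < f x) ->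
  (forall eps, 0 < eps -> exists M : nat, forall m : nat, (M <= m)%nat ->
     g - eps <= sumN (fun j => f (Z.of_nat j)) m / INR m) ->
  forall lo : Z, exists J : nat, forall N : nat, (J <= N)%nat ->
     g / 4 * INR N <= sumN (fun j => f (lo + Z.of_nat j)%Z) N.
Proof.
  intros Hg Hf Hav lo.
  destruct (Hav (g/2)) as [M HM]; [lra|].
  assert (HM' : forall m, (S M <= m)%nat -> g / 2 * INR m <= sumN (fun j => f (Z.of_nat j)) m).
  { intros m Hm. specialize (HM m ltac:(lia)).
    assert (0 < INR m) by (apply lt_0_INR; lia).
    apply Rmult_le_compat_r with (r := INR m) in HM; [|lra].
    unfold Rdiv in HM. rewrite Rmult_assoc, Rinv_l in HM by lra. lra. }
  assert (Hnn : forall j, 0 <= f j) by (intros; apply Rlt_le, Hf).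
  destruct (Z_le_gt_dec 0 lo) as [Hlo|Hlo].
  - set (p := Z.to_nat lo).
    set (C := sumN (fun j => f (Z.of_nat j)) p).
    destruct (nat_large (4 * C / g)) as [J1 HJ1].
    exists (S M + J1)%nat. intros N HN.
    pose proof (HM' (p + N)%nat ltac:(lia)) as H1.
    rewrite sumN_split in H1. fold C in H1.
    rewrite (sumN_ext _ (fun j => f (lo + Z.of_nat j)%Z)) in H1.
    2:{ intros; f_equal; unfold p; lia. }
    rewrite plus_INR in H1.
    assert (INR J1 <= INR N) by (apply le_INR; lia).
    assert (0 <= INR p) by apply pos_INR.
    assert (Heq : 4 * C / g * g = 4 * C) by (field; lra).
    assert (4 * C <= INR N * g).
    { rewrite <- Heq. apply Rmult_le_compat_r; lra. }
    nra.
  - set (p := Z.to_nat (- lo)).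
    exists (2 * p + S M)%nat. intros N HN.
    replace N with (p + (N - p))%nat by lia. rewrite sumN_split.
    pose proof (sumN_nonneg (fun j => f (lo + Z.of_nat j)%Z) p (fun j => Hnn _)).
    rewrite (sumN_ext (fun j => f (lo + Z.of_nat (p + j))%Z) (fun j => f (Z.of_nat j))).
    2:{ intros j Hj; f_equal. unfold p. rewrite Nat2Z.inj_add, Z2Nat.id by lia. lia. }
    pose proof (HM' (N - p)%nat ltac:(lia)) as H2.
    pose proof (minus_INR N p ltac:(lia)) as H3.
    assert (INR (2 * p) <= INR N) as H4 by (apply le_INR; lia).
    rewrite mult_INR in H4. simpl (INR 2) in H4. rewrite plus_INR. nra.
Qed.

Lemma sum_f_nonneg u n : (forall j, 0 <= u j) -> 0 <= sum_f_R0 u n.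
Proof. intros H; induction n; simpl; [apply H|]. specialize (H (S n)); lra. Qed.

Lemma tele_sum K n : sum_f_R0 (fun j => K / ((INR j + 1) * (INR j + 2))) n = K - K / (INR n + 2).
Proof.
  induction n.
  - simpl. field.
  - change (sum_f_R0 ?u (S n)) with (sum_f_R0 u n + u (S n)). cbv beta. rewrite IHn. rewrite S_INR. assert (0 <= INR n) by apply pos_INR. field; lra.
Qed.

Lemma tele K : infinite_sum (fun j => K / ((INR j + 1) * (INR j + 2))) K.
Proof.
  intros eps He. destruct (nat_large (Rabs K / eps)) as [N HN]. exists N. intros n Hn.
  rewrite tele_sum. unfold Rdist.
  replace (K - K / (INR n + 2) - K) with (- (K / (INR n + 2))) by ring.
  rewrite Rabs_Ropp. assert (INR N <= INR n) by (apply le_INR; lia).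
  assert (0 <= INR N) by apply pos_INR.
  unfold Rdiv. rewrite Rabs_mult, (Rabs_right (/ _)).
  2:{ apply Rle_ge, Rlt_le, Rinv_0_lt_compat; lra. }
  apply (Rmult_lt_reg_r (INR n + 2)); [lra|]. rewrite Rmult_assoc, Rinv_l by lra.
  assert (Rabs K / eps * eps = Rabs K) by (field; lra).
  assert (Rabs K <= INR N * eps).
  { rewrite <- H1. apply Rmult_le_compat_r; lra. }
  nra.
Qed.

Lemma conv_comp u v : (forall j, 0 <= u j <= v j) -> (exists l, infinite_sum v l) ->
  exists l, infinite_sum u l.
Proof.
  intros H [l Hl]. destruct (Rseries_CV_comp u v H (exist _ l Hl)) as [l' Hl'].
  exists l'. exact Hl'.
Qed.

Lemma series_spec u : (exists l, infinite_sum u l) -> infinite_sum u (series u).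
Proof.
  intros H. unfold series. destruct excluded_middle_informative as [h|h].
  - exact (proj2_sig (constructive_indefinite_description _ h)).
  - contradiction.
Qed.

Lemma series_le u v : (forall j, 0 <= u j <= v j) -> (exists l, infinite_sum v l) ->
  series u <= series v.
Proof.
  intros H Hv. pose proof (conv_comp u v H Hv) as Hu.
  apply series_spec in Hu. apply series_spec in Hv.
  eapply Rle_cv_lim; [| exact Hu | exact Hv].
  intros n. simpl. induction n; simpl; [apply H|]. specialize (H (S n)); lra.
Qed.

Lemma series_nonneg u : (forall j, 0 <= u j) -> 0 <= series u.
Proof.
  intros H. unfold series. destruct excluded_middle_informative as [h|h]; [|lra].
  pose proof (proj2_sig (constructive_indefinite_description _ h)) as Hl. simpl in Hl.
  apply (@Rle_cv_lim (fun _ : nat => 0) (sum_f_R0 u)); [| | exact Hl].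
  - intros n; apply sum_f_nonneg, H.
  - intros eps He; exists O; intros; unfold Rdist; rewrite Rminus_0_r, Rabs_R0; lra.
Qed.

Lemma psi_term_bound y p c x : 0 < y -> 0 < c -> 0 <= x -> c * (x + 1) <= p ->
  0 <= psi_term y p <= (2 * y / (c * c)) / ((x + 1) * (x + 2)).
Proof.
  intros Hy Hc Hx Hp. assert (0 < p) by nra. unfold psi_term. split.
  - apply Rlt_le. apply Rdiv_lt_0_compat; nra.
  - assert (c <> 0) by (intro; lra). assert (x + 1 <> 0) by (intro; lra). assert (x + 2 <> 0) by (intro; lra).
    replace (2 * y / (c * c) / ((x + 1) * (x + 2))) with (y * / (c * c * (x + 1) * (x + 2) / 2)) by (field; auto).
    unfold Rdiv. apply Rmult_le_compat_l; [lra|]. apply Rinv_le_contravar.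
    + assert (0 < c*c) by nra. assert (0 < (x+1)*(x+2)) by nra.
      assert (0 < c * c * (x + 1) * (x + 2)) by nra. lra.
    + assert (0 <= c * (x+1)) by nra.
      assert (c * c * (x+1) * (x+1) <= p * p).
      { replace (c * c * (x+1) * (x+1)) with ((c * (x+1)) * (c * (x+1))) by ring.
        apply Rmult_le_compat; lra. }
      assert (c * c * (x+1) * (x+2) <= 2 * (p * (y + p))) by nra. lra.
Qed.

Lemma conv_gen (P : nat -> R) y c : 0 < y -> 0 < c -> (forall j, c * INR (S j) <= P j) ->
  exists l, infinite_sum (fun j => psi_term y (P j)) l.
Proof.
  intros Hy Hc HP. apply (conv_comp _ (fun j => (2 * y / (c * c)) / ((INR j + 1) * (INR j + 2)))).
  - intros j. apply psi_term_bound; auto. apply pos_INR. rewrite <- S_INR. auto.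
  - eexists; apply tele.
Qed.

Definition growth_hyp (f : Z -> R) (g : R) := forall eps, 0 < eps -> exists M : nat, forall m : nat, (M <= m)%nat ->
     g - eps <= sumN (fun j => f (Z.of_nat j)) m / INR m.

Lemma lin_lower f g lo : 0 < g -> (forall x, 0 < f x) -> growth_hyp f g ->
  exists c, 0 < c /\ forall j, c * INR (S j) <= sumN (fun j' => f (lo + Z.of_nat j')%Z) (S j).
Proof.
  intros Hg Hf Hgr. destruct (growth f g Hg Hf Hgr lo) as [J HJ].
  assert (HSJ : 0 < INR (S J)) by (apply lt_0_INR; lia).
  pose proof (Hf lo) as Hflo.
  exists (Rmin (g/4) (f lo / INR (S J))). split.
  { apply Rmin_glb_lt; [lra|]. apply Rdiv_lt_0_compat; lra. }
  intros j. destruct (le_lt_dec J (S j)) as [h|h].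
  - eapply Rle_trans; [|apply HJ; auto]. apply Rmult_le_compat_r; [apply pos_INR|apply Rmin_l].
  - eapply Rle_trans; [apply Rmult_le_compat_r; [apply pos_INR|apply Rmin_r]|].
    eapply Rle_trans; [|apply (sumN_mono_len _ 1); [intros; apply Rlt_le, Hf|lia]].
    replace (sumN (fun j' => f (lo + Z.of_nat j')%Z) 1) with (f lo) by (simpl; rewrite Z.add_0_r; ring).
    assert (INR (S j) <= INR (S J)) by (apply le_INR; lia).
    unfold Rdiv. rewrite Rmult_assoc.
    assert (/ INR (S J) * INR (S j) <= 1).
    { apply (Rmult_le_reg_l (INR (S J))); [lra|]. rewrite <- Rmult_assoc, Rinv_r by lra. lra. }
    nra.
Qed.

Lemma growth_right z g : in_Ylow g z -> growth_hyp z g.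
Proof.
  intros [Hpos Hav] eps He. destruct (Hav eps He) as [M0 HM0].
  exists (S (Z.to_nat M0)). intros m Hm.
  specialize (HM0 (Z.of_nat m) ltac:(lia)).
  unfold Av0 in HM0. destruct (Z.ltb_spec 0 (Z.of_nat m)); [|lia].
  unfold sumZ in HM0. replace (Z.to_nat (Z.of_nat m - 1 - 0 + 1)) with m in HM0 by lia.
  rewrite <- INR_IZR_INZ in HM0. erewrite sumN_ext; [exact HM0|].
  intros; simpl; f_equal; lia.
Qed.

Lemma growth_left z g : in_Ylow g z -> growth_hyp (fun x => z (-1 - x)%Z) g.
Proof.
  intros [Hpos Hav] eps He. destruct (Hav eps He) as [M0 HM0].
  exists (S (Z.to_nat M0)). intros m Hm.
  specialize (HM0 (- Z.of_nat m)%Z ltac:(lia)).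
  unfold Av0 in HM0. destruct (Z.ltb_spec 0 (- Z.of_nat m)); [lia|].
  destruct (Z.ltb_spec (- Z.of_nat m) 0); [|lia].
  unfold sumZ in HM0. replace (Z.to_nat (-1 - - Z.of_nat m + 1)) with m in HM0 by lia.
  rewrite Z.opp_involutive, <- INR_IZR_INZ in HM0. rewrite sumN_rev in HM0.
  erewrite sumN_ext; [exact HM0|].
  intros; cbv beta; f_equal; lia.
Qed.

Lemma conv_right z g k y : 0 < g -> in_Ylow g z -> 0 < y ->
  exists l, infinite_sum (fun j => psi_term y (zint z k (k + 2 + Z.of_nat j))) l.
Proof.
  intros Hg Hz Hy. pose proof (growth_right z g Hz) as Hgr.
  destruct (lin_lower z g (k + 1) Hg (proj1 Hz) Hgr) as [c [Hc Hl]].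
  apply (conv_gen (fun j => zint z k (k + 2 + Z.of_nat j)) y c Hy Hc).
  intros j. unfold zint. destruct (Z.ltb_spec k (k + 2 + Z.of_nat j)); [|lia].
  unfold sumZ. replace (Z.to_nat (k + 2 + Z.of_nat j - 1 - (k + 1) + 1)) with (S j) by lia.
  exact (Hl j).
Qed.

Lemma conv_left z g k y : 0 < g -> in_Ylow g z -> 0 < y ->
  exists l, infinite_sum (fun j => psi_term y (zint z k (k - 1 - Z.of_nat j))) l.
Proof.
  intros Hg Hz Hy. pose proof (growth_left z g Hz) as Hgr.
  destruct (lin_lower (fun x => z (-1 - x)%Z) g (- k) Hg (fun x => proj1 Hz _) Hgr) as [c [Hc Hl]].
  apply (conv_gen (fun j => zint z k (k - 1 - Z.of_nat j)) y c Hy Hc).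
  intros j. unfold zint. destruct (Z.ltb_spec k (k - 1 - Z.of_nat j)); [lia|].
  unfold sumZ. replace (Z.to_nat (k - 1 - (k - 1 - Z.of_nat j) + 1)) with (S j) by lia.
  rewrite sumN_rev. eapply Rle_trans; [apply (Hl j)|]. right. apply sumN_ext.
  intros; f_equal; lia.
Qed.

Lemma sumZ_pos z lo hi : (forall b, 0 < z b) -> (lo <= hi)%Z -> 0 < sumZ z lo hi.
Proof.
  intros Hz H. unfold sumZ. replace (Z.to_nat (hi - lo + 1)) with (S (Z.to_nat (hi - lo))) by lia.
  simpl. pose proof (sumN_nonneg (fun j => z (lo + Z.of_nat j)%Z) (Z.to_nat (hi - lo)) (fun j => Rlt_le _ _ (Hz _))).
  pose proof (Hz (lo + Z.of_nat (Z.to_nat (hi - lo)))%Z). lra.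
Qed.

Lemma zint_pos_r z k j : (forall b, 0 < z b) -> 0 < zint z k (k + 2 + Z.of_nat j).
Proof. intros Hz. unfold zint. destruct (Z.ltb_spec k (k + 2 + Z.of_nat j)); [|lia]. apply sumZ_pos; auto; lia. Qed.

Lemma zint_pos_l z k j : (forall b, 0 < z b) -> 0 < zint z k (k - 1 - Z.of_nat j).
Proof. intros Hz. unfold zint. destruct (Z.ltb_spec k (k - 1 - Z.of_nat j)); [lia|]. apply sumZ_pos; auto; lia. Qed.

Lemma zint_le z z' k i : (forall b, z' b <= z b) -> zint z' k i <= zint z k i.
Proof. intros H. unfold zint, sumZ. destruct (Z.ltb k i); apply sumN_le; intros; apply H. Qed.

Lemma psi_term_nonneg y p : 0 < y -> 0 < p -> 0 <= psi_term y p.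
Proof. intros. unfold psi_term. apply Rlt_le, Rdiv_lt_0_compat; nra. Qed.

Lemma psi_term_mono y y' p p' : 0 < y -> y <= y' -> 0 < p' -> p' <= p -> psi_term y p <= psi_term y' p'.
Proof.
  intros Hy Hyy Hp Hpp. apply Rle_trans with (psi_term y' p).
  - unfold psi_term. replace (y / (p * (y + p))) with (/ p - / (y + p)) by (field; split; intro; lra).
    replace (y' / (p * (y' + p))) with (/ p - / (y' + p)) by (field; split; intro; lra).
    assert (/ (y' + p) <= / (y + p)) by (apply Rinv_le_contravar; lra). lra.
  - unfold psi_term, Rdiv. apply Rmult_le_compat_l; [lra|]. apply Rinv_le_contravar; nra.
Qed.

Lemma psi_nonneg k y z : (forall b, 0 < z b) -> 0 <= psi k y z.
Proof.
  intros Hz. unfold psi. destruct (Rlt_dec 0 y); [|lra].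
  assert (0 <= series (fun j => psi_term y (zint z k (k + 2 + Z.of_nat j)))).
  { apply series_nonneg; intros; apply psi_term_nonneg; auto; apply zint_pos_r; auto. }
  assert (0 <= series (fun j => psi_term y (zint z k (k - 1 - Z.of_nat j)))).
  { apply series_nonneg; intros; apply psi_term_nonneg; auto; apply zint_pos_l; auto. }
  lra.
Qed.

Lemma psi_mono k y y' z z' g : 0 < g -> 0 < y -> y <= y' -> (forall b, z' b <= z b) ->
  in_Ylow g z' -> psi k y z <= psi k y' z'.
Proof.
  intros Hg Hy Hyy Hzz Hz'. pose proof (proj1 Hz') as Hp.
  unfold psi. destruct (Rlt_dec 0 y); [|lra]. destruct (Rlt_dec 0 y'); [|lra].
  apply Rmult_le_compat_l; [lra|]. apply Rplus_le_compat; apply series_le.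
  - intros j. split.
    + apply psi_term_nonneg; auto. apply Rlt_le_trans with (zint z' k (k + 2 + Z.of_nat j)).
      apply zint_pos_r; auto. apply zint_le; auto.
    + apply psi_term_mono; auto. apply zint_pos_r; auto. apply zint_le; auto.
  - apply (conv_right z' g); auto.
  - intros j. split.
    + apply psi_term_nonneg; auto. apply Rlt_le_trans with (zint z' k (k - 1 - Z.of_nat j)).
      apply zint_pos_l; auto. apply zint_le; auto.
    + apply psi_term_mono; auto. apply zint_pos_l; auto. apply zint_le; auto.
  - apply (conv_left z' g); auto.
Qed.

Lemma comp_principle (D : R -> R) : cont_nonneg D -> 0 <= D 0 ->
  (forall s t, 0 <= s <= t -> (forall u, s < u <= t -> D u < 0) -> D s <= D t) ->
  forall t, 0 <= t -> 0 <= D t.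
Proof.
  intros Hc H0 Hst t Ht. destruct (Rle_lt_dec 0 (D t)) as [h|h]; auto. exfalso.
  set (E := fun x => 0 <= x <= t /\ 0 <= D x).
  assert (Hb : bound E) by (exists t; intros x [Hx _]; lra).
  assert (Hne : exists x, E x) by (exists 0; unfold E; lra).
  destruct (completeness E Hb Hne) as [s [Hub Hlub]].
  assert (Hs0 : 0 <= s) by (apply Hub; unfold E; lra).
  assert (Hst' : s <= t) by (apply Hlub; intros x [Hx _]; lra).
  assert (HDs : 0 <= D s).
  { destruct (Rle_lt_dec 0 (D s)) as [q|q]; auto. exfalso.
    destruct (Hc s Hs0 (- D s) ltac:(lra)) as [del [Hdel Hd]].
    destruct (classic (exists x, E x /\ s - del < x)) as [[x [[Hx1 Hx2] Hx3]]|Hn].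
    - assert (x <= s) by (apply Hub; split; auto).
      assert (Rabs (x - s) < del) by (apply Rabs_def1; lra).
      specialize (Hd x ltac:(lra) H1). apply Rabs_def2 in Hd. lra.
    - assert (s <= s - del); [|lra]. apply Hlub. intros x Hx.
      destruct (Rle_lt_dec x (s - del)); auto. exfalso; apply Hn; eauto. }
  assert (Hneg : forall u, s < u <= t -> D u < 0).
  { intros u Hu. destruct (Rle_lt_dec 0 (D u)) as [q|q]; auto.
    assert (u <= s) by (apply Hub; unfold E; split; [lra|auto]). lra. }
  specialize (Hst s t ltac:(lra) Hneg). lra.
Qed.

Lemma int_mono f1 f2 s t A1 B1 A2 B2 : 0 <= s <= t ->
  is_integral f1 s A1 -> is_integral f1 t B1 -> is_integral f2 s A2 -> is_integral f2 t B2 ->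
  (forall u, s < u < t -> f2 u <= f1 u) -> B2 - A2 <= B1 - A1.
Proof.
  intros Hst [p1s E1s] [p1t E1t] [p2s E2s] [p2t E2t] Hle.
  pose (q1 := RiemannInt_P23 p1t (conj (proj1 Hst) (proj2 Hst))).
  pose (q2 := RiemannInt_P23 p2t (conj (proj1 Hst) (proj2 Hst))).
  pose proof (RiemannInt_P26 p1s q1 p1t). pose proof (RiemannInt_P26 p2s q2 p2t).
  pose proof (RiemannInt_P19 q2 q1 (proj2 Hst) Hle). lra.
Qed.

Lemma integral_at0 f I : is_integral f 0 I -> I = 0.
Proof. intros [p E]. rewrite <- E. apply RiemannInt_P9. Qed.

Lemma cont_diff f g : cont_nonneg f -> cont_nonneg g -> cont_nonneg (fun x => f x - g x).
Proof.
  intros Hf Hg t Ht eps He. destruct (Hf t Ht (eps/2) ltac:(lra)) as [d1 [Hd1 H1]].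
  destruct (Hg t Ht (eps/2) ltac:(lra)) as [d2 [Hd2 H2]].
  exists (Rmin d1 d2). split; [apply Rmin_glb_lt; auto|]. intros s Hs Hsd.
  specialize (H1 s Hs ltac:(eapply Rlt_le_trans; [exact Hsd|apply Rmin_l])).
  specialize (H2 s Hs ltac:(eapply Rlt_le_trans; [exact Hsd|apply Rmin_r])).
  apply Rabs_def2 in H1; apply Rabs_def2 in H2. apply Rabs_def1; lra.
Qed.

Lemma step (X1 X2 f1 f2 W : R -> R) (c1 c2 beta : R) : 0 < beta ->
  cont_nonneg X1 -> cont_nonneg X2 -> c2 <= c1 ->
  (forall t, 0 <= t -> is_integral f1 t ((X1 t - c1 - W t) / beta)) ->
  (forall t, 0 <= t -> is_integral f2 t ((X2 t - c2 - W t) / beta)) ->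
  (forall u, 0 <= u -> X1 u < X2 u -> f2 u <= f1 u) ->
  forall t, 0 <= t -> X2 t <= X1 t.
Proof.
  intros Hb Hc1 Hc2 Hc H1 H2 Hcmp t Ht.
  cut (0 <= X1 t - X2 t); [lra|].
  apply (comp_principle (fun x => X1 x - X2 x)); auto.
  - apply cont_diff; auto.
  - pose proof (integral_at0 _ _ (H1 0 (Rle_refl 0))). pose proof (integral_at0 _ _ (H2 0 (Rle_refl 0))).
    assert (X1 0 - c1 - W 0 = 0).
    { apply (Rmult_eq_reg_r (/ beta)); [rewrite Rmult_0_l; exact H|]. apply Rgt_not_eq, Rinv_0_lt_compat; lra. }
    assert (X2 0 - c2 - W 0 = 0).
    { apply (Rmult_eq_reg_r (/ beta)); [rewrite Rmult_0_l; exact H0|]. apply Rgt_not_eq, Rinv_0_lt_compat; lra. }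
    lra.
  - intros s u Hsu Hneg.
    pose proof (int_mono f1 f2 s u _ _ _ _ Hsu (H1 s ltac:(lra)) (H1 u ltac:(lra)) (H2 s ltac:(lra)) (H2 u ltac:(lra))) as Hm.
    assert (Hle : forall v, s < v < u -> f2 v <= f1 v).
    { intros v Hv. apply Hcmp; [lra|]. specialize (Hneg v ltac:(lra)). simpl in Hneg. lra. }
    specialize (Hm Hle).
    unfold Rdiv in Hm.
    assert (((X2 u - X2 s) - (W u - W s)) * / beta <= ((X1 u - X1 s) - (W u - W s)) * / beta) by lra.
    apply Rmult_le_reg_r in H; [lra|]. apply Rinv_0_lt_compat; lra.
Qed.

Lemma ylowT_at g Y s : in_YlowT g Y -> 0 <= s -> in_Ylow g (fun b => Y b s).
Proof.
  intros [Hc Hav] Hs. split.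
  - intros k. apply (proj2 (Hc k)), Hs.
  - intros eps He. destruct (Hav s Hs eps He) as [M HM]. exists M. intros m Hm.
    apply HM; auto; lra.
Qed.

Theorem proposition3p1 (beta gamma : R) (n : nat) (B : Z -> R -> R)
    (yin zin : Z -> R) (Y Zc : nat -> Z -> R -> R) :
  1 <= beta -> 0 < gamma ->
  (forall b : Z, B b 0 = 0 /\ cont_nonneg (B b)) ->
  in_Ylow gamma yin -> in_Ylow gamma zin ->
  (forall i, (i <= n)%nat -> in_YlowT gamma (Y i)) ->
  (forall i, (i <= n)%nat -> in_YlowT gamma (Zc i)) ->
  iteration beta B yin n Y -> iteration beta B zin n Zc ->
  (forall i, (i < n)%nat -> path_le (Y (S i)) (Y i)) /\
  ((forall k, zin k <= yin k) -> forall i, (i <= n)%nat -> path_le (Zc i) (Y i)).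
Proof.
  intros Hbeta Hg HB Hyin Hzin HY HZ [HY0 HYi] [HZ0 HZi].
  assert (Hb : 0 < beta) by lra.
  assert (HposY : forall i k u, (i <= n)%nat -> 0 <= u -> 0 < Y i k u).
  { intros i k u Hi Hu. apply (proj2 (proj1 (HY i Hi) k)), Hu. }
  assert (HposZ : forall i k u, (i <= n)%nat -> 0 <= u -> 0 < Zc i k u).
  { intros i k u Hi Hu. apply (proj2 (proj1 (HZ i Hi) k)), Hu. }
  assert (HcY : forall i k, (i <= n)%nat -> cont_nonneg (Y i k)).
  { intros i k Hi. apply (proj1 (proj1 (HY i Hi) k)). }
  assert (HcZ : forall i k, (i <= n)%nat -> cont_nonneg (Zc i k)).
  { intros i k Hi. apply (proj1 (proj1 (HZ i Hi) k)). }
  split.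
  - induction i as [|i IH]; intros Hi k t Ht.
    + apply (step (Y 0%nat k) (Y 1%nat k) (fun s => / Y 0%nat k s)
        (fun s => / Y 1%nat k s - psi k (Y 1%nat k s) (fun b => Y 0%nat b s)) (Wd B k) (yin k) (yin k) beta);
      [exact Hb| | |lra| | | |exact Ht].
      * apply HcY; lia.
      * apply HcY; lia.
      * intros; apply HY0; auto.
      * intros s Hs. exact (HYi 1%nat ltac:(lia) k s Hs).
      * intros u Hu Hlt. pose proof (HposY 0%nat k u ltac:(lia) Hu).
        assert (0 <= psi k (Y 1%nat k u) (fun b => Y 0%nat b u)).
        { apply psi_nonneg. intros; apply HposY; auto; lia. }
        assert (/ Y 1%nat k u <= / Y 0%nat k u) by (apply Rinv_le_contravar; lra). lra.
    + specialize (IH ltac:(lia)).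
      apply (step (Y (S i) k) (Y (S (S i)) k)
        (fun s => / Y (S i) k s - psi k (Y (S i) k s) (fun b => Y i b s))
        (fun s => / Y (S (S i)) k s - psi k (Y (S (S i)) k s) (fun b => Y (S i) b s)) (Wd B k) (yin k) (yin k) beta);
      [exact Hb| | |lra| | | |exact Ht].
      * apply HcY; lia.
      * apply HcY; lia.
      * intros s Hs. pose proof (HYi (S i) ltac:(lia) k s Hs) as H.
        replace (S i - 1)%nat with i in H by lia. exact H.
      * intros s Hs. pose proof (HYi (S (S i)) ltac:(lia) k s Hs) as H.
        replace (S (S i) - 1)%nat with (S i) in H by lia. exact H.
      * intros u Hu Hlt. pose proof (HposY (S i) k u ltac:(lia) Hu).
        assert (psi k (Y (S i) k u) (fun b => Y i b u) <= psi k (Y (S (S i)) k u) (fun b => Y (S i) b u)).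
        { apply (psi_mono _ _ _ _ _ gamma); [exact Hg|lra|lra| |].
          - intros b; apply IH; auto.
          - apply ylowT_at; auto; apply HY; lia. }
        assert (/ Y (S (S i)) k u <= / Y (S i) k u) by (apply Rinv_le_contravar; lra). lra.
  - intros Hin. induction i as [|i IH]; intros Hi k t Ht.
    + apply (step (Y 0%nat k) (Zc 0%nat k) (fun s => / Y 0%nat k s) (fun s => / Zc 0%nat k s)
        (Wd B k) (yin k) (zin k) beta); [exact Hb| | |apply Hin|apply HY0|apply HZ0| |exact Ht].
      * apply HcY; lia.
      * apply HcZ; lia.
      * intros u Hu Hlt. pose proof (HposY 0%nat k u ltac:(lia) Hu).
        apply Rinv_le_contravar; lra.
    + specialize (IH ltac:(lia)).
      apply (step (Y (S i) k) (Zc (S i) k)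
        (fun s => / Y (S i) k s - psi k (Y (S i) k s) (fun b => Y i b s))
        (fun s => / Zc (S i) k s - psi k (Zc (S i) k s) (fun b => Zc i b s)) (Wd B k) (yin k) (zin k) beta);
      [exact Hb| | |apply Hin| | | |exact Ht].
      * apply HcY; lia.
      * apply HcZ; lia.
      * intros s Hs. pose proof (HYi (S i) ltac:(lia) k s Hs) as H.
        replace (S i - 1)%nat with i in H by lia. exact H.
      * intros s Hs. pose proof (HZi (S i) ltac:(lia) k s Hs) as H.
        replace (S i - 1)%nat with i in H by lia. exact H.
      * intros u Hu Hlt. pose proof (HposY (S i) k u ltac:(lia) Hu).
        assert (psi k (Y (S i) k u) (fun b => Y i b u) <= psi k (Zc (S i) k u) (fun b => Zc i b u)).
        { apply (psi_mono _ _ _ _ _ gamma); [exact Hg|lra|lra| |].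
          - intros b; apply IH; auto.
          - apply ylowT_at; auto; apply HZ; lia. }
        assert (/ Zc (S i) k u <= / Y (S i) k u) by (apply Rinv_le_contravar; lra). lra.
Qed.
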